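(* Let $x_1<x_2$, $u_0\in C^4([x_1,x_2])$ and $u_1\in C^3([x_1,x_2])$. Consider the Tricomi equation $y\,u_{xx}+u_{yy}=0$ with the data $u(x,0)=u_0(x)$, $u_y(x,0)=u_1(x)$ for $x\in[x_1,x_2]$. Then there exists a constant $\bar\delta$ with $0<\bar\delta\le\sqrt[3]{\frac{9(x_2-x_1)^2}{16}}$ such that this boundary problem has a classical solution in the region \[ \overline D_{\bar\delta}=\Big\{(x,y):\ -\bar\delta\le y\le 0,\ x_1+\tfrac23(-y)^{3/2}\le x\le x_2-\tfrac23(-y)^{3/2}\Big\}. \] *)

(* Defs.v *)
From Stdlib Require Import Reals.
Open Scope R_scope.

Definition derive_within (D : R -> Prop) (f f' : R -> R) : Prop :=
  forall x, D x ->
    forall eps, 0 < eps -> exists del, 0 < del /\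
      forall y, D y -> y <> x -> Rabs (y - x) < del ->
        Rabs ((f y - f x) / (y - x) - f' x) < eps.

Definition continuous_within (D : R -> Prop) (f : R -> R) : Prop :=
  forall x, D x ->
    forall eps, 0 < eps -> exists del, 0 < del /\
      forall y, D y -> Rabs (y - x) < del -> Rabs (f y - f x) < eps.

Definition Ck_on (k : nat) (D : R -> Prop) (f : R -> R) : Prop :=
  exists F : nat -> R -> R,
    F 0%nat = f /\
    (forall i, (i < k)%nat -> derive_within D (F i) (F (S i))) /\
    continuous_within D (F k).

Definition closed_interval (a b : R) : R -> Prop := fun x => a <= x <= b.

Definition continuous2_within (D : R -> R -> Prop) (f : R -> R -> R) : Prop :=
  forall x y, D x y ->
    forall eps, 0 < eps -> exists del, 0 < del /\
      forall x' y', D x' y' -> Rabs (x' - x) < del -> Rabs (y' - y) < del ->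
        Rabs (f x' y' - f x y) < eps.

(* (-y)^{3/2} for y <= 0, written as (-y) * sqrt(-y). *)
Definition pow32 (t : R) : R := t * sqrt t.

Definition region (x1 x2 delta : R) : R -> R -> Prop := fun x y =>
  - delta <= y <= 0 /\
  x1 + 2/3 * pow32 (- y) <= x <= x2 - 2/3 * pow32 (- y).

Definition region_int (x1 x2 delta : R) : R -> R -> Prop := fun x y =>
  - delta < y < 0 /\
  x1 + 2/3 * pow32 (- y) < x < x2 - 2/3 * pow32 (- y).

Definition classical_solution (x1 x2 delta : R) (u0 u1 : R -> R)
    (u : R -> R -> R) : Prop :=
  exists ux uy uxx uxy uyy : R -> R -> R,
    (forall x y, region_int x1 x2 delta x y ->
       derivable_pt_lim (fun t => u t y) x (ux x y) /\
       derivable_pt_lim (fun t => u x t) y (uy x y) /\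
       derivable_pt_lim (fun t => ux t y) x (uxx x y) /\
       derivable_pt_lim (fun t => ux x t) y (uxy x y) /\
       derivable_pt_lim (fun t => uy t y) x (uxy x y) /\
       derivable_pt_lim (fun t => uy x t) y (uyy x y)) /\
    continuous2_within (region x1 x2 delta) u /\
    continuous2_within (region x1 x2 delta) ux /\
    continuous2_within (region x1 x2 delta) uy /\
    continuous2_within (region x1 x2 delta) uxx /\
    continuous2_within (region x1 x2 delta) uxy /\
    continuous2_within (region x1 x2 delta) uyy /\
    (forall x y, region x1 x2 delta x y -> y * uxx x y + uyy x y = 0) /\
    (forall x, x1 <= x <= x2 -> u x 0 = u0 x /\ uy x 0 = u1 x).

(* Main.v *)
Require Import Defs.
From Stdlib Require Import Reals Lra Lia.
From Coquelicot Require Import Coquelicot.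
Open Scope R_scope.

Lemma cont_pt_of_eps (f : R -> R) x :
  (forall eps, 0 < eps -> exists del, 0 < del /\
     forall y, Rabs (y - x) < del -> Rabs (f y - f x) < eps) ->
  continuity_pt f x.
Proof.
  intros H eps Heps. destruct (H eps Heps) as [del [Hd Hy]].
  exists del; split; [lra|]. intros y [_ Hyx]. apply Hy. exact Hyx.
Qed.

Lemma dw_cont D f f' : derive_within D f f' -> continuous_within D f.
Proof.
  intros H x Dx eps Heps.
  destruct (H x Dx 1 Rlt_0_1) as [del [Hd Hy]].
  assert (HK : 0 < Rabs (f' x) + 1) by (pose proof (Rabs_pos (f' x)); lra).
  exists (Rmin del (eps / (Rabs (f' x) + 1))). split.
  { apply Rmin_pos; [lra| apply Rdiv_lt_0_compat; lra]. }
  intros y Dy Hyx.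
  destruct (Req_dec y x) as [->|Hne].
  { rewrite Rminus_diag, Rabs_R0. lra. }
  assert (Hyx1 : Rabs (y - x) < del) by (eapply Rlt_le_trans; [exact Hyx| apply Rmin_l]).
  assert (Hyx2 : Rabs (y - x) < eps / (Rabs (f' x) + 1)) by (eapply Rlt_le_trans; [exact Hyx| apply Rmin_r]).
  specialize (Hy y Dy Hne Hyx1).
  set (q := (f y - f x) / (y - x)) in *.
  assert (E : f y - f x = q * (y - x)) by (unfold q; field; lra).
  rewrite E, Rabs_mult.
  assert (Hq : Rabs q < Rabs (f' x) + 1).
  { replace q with ((q - f' x) + f' x) by ring.
    eapply Rle_lt_trans; [apply Rabs_triang|]. lra. }
  assert (Hyx3 : Rabs (y - x) * (Rabs (f' x) + 1) < eps).
  { apply (Rmult_lt_compat_r (Rabs (f' x) + 1)) in Hyx2; [|lra].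
    unfold Rdiv in Hyx2. rewrite Rmult_assoc, Rinv_l in Hyx2; lra. }
  pose proof (Rabs_pos q). pose proof (Rabs_pos (y - x)).
  nra.
Qed.

Definition clamp a b x := Rmax a (Rmin b x).

Lemma clamp_in a b x : a <= b -> a <= clamp a b x <= b.
Proof. intros; unfold clamp, Rmax, Rmin; repeat destruct Rle_dec; lra. Qed.

Lemma clamp_id a b x : a <= x <= b -> clamp a b x = x.
Proof. intros; unfold clamp, Rmax, Rmin; repeat destruct Rle_dec; lra. Qed.

Lemma clamp_lip a b x y : Rabs (clamp a b y - clamp a b x) <= Rabs (y - x).
Proof.
  unfold clamp, Rmax, Rmin; repeat destruct Rle_dec;
  unfold Rabs; repeat destruct Rcase_abs; lra.
Qed.

Lemma cont_clamp a b h : a <= b -> continuous_within (closed_interval a b) h ->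
  forall z, continuity_pt (fun x => h (clamp a b x)) z.
Proof.
  intros Hab H z. apply cont_pt_of_eps. intros eps Heps.
  destruct (H (clamp a b z) (clamp_in a b z Hab) eps Heps) as [del [Hd Hy]].
  exists del; split; [exact Hd|]. intros y Hyz.
  apply Hy. apply clamp_in; exact Hab.
  eapply Rle_lt_trans; [apply clamp_lip| exact Hyz].
Qed.

Lemma glob_dw D f f' : (forall x, is_derive f x (f' x)) -> derive_within D f f'.
Proof.
  intros H x _ eps Heps.
  pose proof (proj1 (is_derive_Reals f x (f' x)) (H x)) as Hl.
  destruct (Hl eps Heps) as [del Hd].
  exists del; split; [apply cond_pos|]. intros y _ Hne Hyx.
  assert (Hh : y - x <> 0) by lra.
  specialize (Hd (y - x) Hh Hyx). replace (x + (y - x)) with y in Hd by ring. exact Hd.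
Qed.

Lemma dw_minus D f f' g g' : derive_within D f f' -> derive_within D g g' ->
  derive_within D (fun x => f x - g x) (fun x => f' x - g' x).
Proof.
  intros Hf Hg x Dx eps Heps.
  destruct (Hf x Dx (eps/2)) as [d1 [Hd1 H1]]; [lra|].
  destruct (Hg x Dx (eps/2)) as [d2 [Hd2 H2]]; [lra|].
  exists (Rmin d1 d2); split; [apply Rmin_pos; lra|].
  intros y Dy Hne Hyx.
  assert (A1 : Rabs (y - x) < d1) by (eapply Rlt_le_trans; [exact Hyx| apply Rmin_l]).
  assert (A2 : Rabs (y - x) < d2) by (eapply Rlt_le_trans; [exact Hyx| apply Rmin_r]).
  specialize (H1 y Dy Hne A1). specialize (H2 y Dy Hne A2).
  replace ((f y - g y - (f x - g x)) / (y - x) - (f' x - g' x)) with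
    (((f y - f x) / (y - x) - f' x) - ((g y - g x) / (y - x) - g' x))
    by (field; lra).
  eapply Rle_lt_trans; [apply Rabs_triang|]. rewrite Rabs_Ropp. lra.
Qed.

Lemma dw_const a b q q' : a < b -> derive_within (closed_interval a b) q q' ->
  (forall x, a <= x <= b -> q' x = 0) -> forall x, a <= x <= b -> q x = q a.
Proof.
  intros Hab Hq Hq0.
  set (qc := fun x => q (clamp a b x)).
  assert (Hc : forall z, continuity_pt qc z).
  { apply cont_clamp; [lra| eapply dw_cont; exact Hq]. }
  assert (Hd : forall x, a < x < b -> derivable_pt_lim qc x 0).
  { intros x Hx eps Heps.
    destruct (Hq x (conj (Rlt_le _ _ (proj1 Hx)) (Rlt_le _ _ (proj2 Hx))) eps Heps) as [del [Hdel Hy]].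
    assert (Hp : 0 < Rmin del (Rmin (x - a) (b - x))).
    { apply Rmin_pos; [lra| apply Rmin_pos; lra]. }
    exists (mkposreal _ Hp). intros h hn hh. simpl in hh.
    assert (h1 : Rabs h < del) by (eapply Rlt_le_trans; [exact hh| apply Rmin_l]).
    assert (h2 : Rabs h < Rmin (x - a) (b - x)) by (eapply Rlt_le_trans; [exact hh| apply Rmin_r]).
    assert (h3 : Rabs h < x - a) by (eapply Rlt_le_trans; [exact h2| apply Rmin_l]).
    assert (h4 : Rabs h < b - x) by (eapply Rlt_le_trans; [exact h2| apply Rmin_r]).
    assert (Hxh : a <= x + h <= b) by (unfold Rabs in *; destruct Rcase_abs; lra).
    unfold qc. rewrite (clamp_id a b (x + h) Hxh), (clamp_id a b x) by lra.
    specialize (Hy (x + h) Hxh). replace (x + h - x) with h in Hy by ring.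
    rewrite <- (Hq0 x) by lra. apply Hy; [lra| exact h1]. }
  set (pr := fun x (Hx : a < x < b) => exist (fun l => derivable_pt_lim qc x l) 0 (Hd x Hx)).
  assert (Hcst := null_derivative_loc qc a b pr (fun x _ => Hc x)
     (fun x P => derive_pt_eq_0 _ _ _ _ (Hd x P))).
  intros x Hx. specialize (Hcst x Hx). unfold qc in Hcst.
  rewrite (clamp_id a b x Hx), (clamp_id a b a) in Hcst by lra. exact Hcst.
Qed.
Lemma isd_plus (f g : R -> R) x a b : is_derive f x a -> is_derive g x b ->
  is_derive (fun y => f y + g y) x (a + b).
Proof. rewrite !is_derive_Reals. intros; apply derivable_pt_lim_plus; auto. Qed.
Lemma isd_minus (f g : R -> R) x a b : is_derive f x a -> is_derive g x b ->
  is_derive (fun y => f y - g y) x (a - b).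
Proof. rewrite !is_derive_Reals. intros; apply derivable_pt_lim_minus; auto. Qed.
Lemma isd_mult (f g : R -> R) x a b : is_derive f x a -> is_derive g x b ->
  is_derive (fun y => f y * g y) x (a * g x + f x * b).
Proof. rewrite !is_derive_Reals. intros; apply derivable_pt_lim_mult; auto. Qed.
Lemma isd_const (c : R) x : is_derive (fun _ => c) x 0.
Proof. rewrite is_derive_Reals. apply derivable_pt_lim_const. Qed.
Lemma isd_id x : is_derive (fun y : R => y) x 1.
Proof. rewrite is_derive_Reals. apply derivable_pt_lim_id. Qed.
Lemma isd_comp (f g : R -> R) x a b : is_derive f (g x) a -> is_derive g x b ->
  is_derive (fun y => f (g y)) x (a * b).
Proof. rewrite !is_derive_Reals. intros. apply (derivable_pt_lim_comp g f); auto. Qed.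
Lemma isd_eq (f : R -> R) (x a b : R) : is_derive f x a -> a = b -> is_derive f x b.
Proof. intros H ->; exact H. Qed.
Lemma isd_ext (f g : R -> R) x a : (forall y, f y = g y) -> is_derive f x a -> is_derive g x a.
Proof. intros E H. apply (is_derive_ext f g); auto. Qed.
Lemma isd_cont (f : R -> R) x l : is_derive f x l -> continuity_pt f x.
Proof. rewrite is_derive_Reals. intros H. apply derivable_continuous_pt. exists l; exact H. Qed.
Lemma Rabs_le_inv x y : Rabs x <= y -> -y <= x <= y.
Proof. unfold Rabs; destruct Rcase_abs; lra. Qed.
Lemma cpt_plus (f g : R -> R) x : continuity_pt f x -> continuity_pt g x -> continuity_pt (fun y => f y + g y) x.
Proof. apply continuity_pt_plus. Qed.
Lemma cpt_minus (f g : R -> R) x : continuity_pt f x -> continuity_pt g x -> continuity_pt (fun y => f y - g y) x.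
Proof. apply continuity_pt_minus. Qed.
Lemma cpt_mult (f g : R -> R) x : continuity_pt f x -> continuity_pt g x -> continuity_pt (fun y => f y * g y) x.
Proof. apply continuity_pt_mult. Qed.
Lemma cpt_scal (f : R -> R) c x : continuity_pt f x -> continuity_pt (fun y => c * f y) x.
Proof. intros H. apply (cpt_mult (fun _ => c) f); auto. apply continuity_pt_const; intros ? ?; auto. Qed.
Lemma cont_ex_RInt (e : R -> R) : (forall z, continuity_pt e z) -> forall a x, ex_RInt e a x.
Proof.
  intros He a x. apply (@ex_RInt_continuous R_CompleteNormedModule). intros z _.
  apply continuity_pt_filterlim. apply He.
Qed.

Lemma ext_step a b (h h1 e1 : R -> R) : a < b ->
  derive_within (closed_interval a b) h h1 ->
  (forall z, continuity_pt e1 z) -> (forall x, a <= x <= b -> e1 x = h1 x) ->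
  (forall z, is_derive (fun x => h a + RInt e1 a x) z (e1 z)) /\
  (forall x, a <= x <= b -> h a + RInt e1 a x = h x).
Proof.
  intros Hab Hh He Heq.
  assert (Hd : forall z, is_derive (fun x => h a + RInt e1 a x) z (e1 z)).
  { intros z.
    assert (Hi : is_derive (fun x => RInt e1 a x) z (e1 z)).
    { apply (is_derive_RInt e1 (fun x => RInt e1 a x) a z).
      - apply filter_forall. intros y. apply (@RInt_correct R_CompleteNormedModule). apply cont_ex_RInt; exact He.
      - apply continuity_pt_filterlim. apply He. }
    apply isd_eq with (a := 0 + e1 z); [| apply Rplus_0_l]. apply isd_plus. apply isd_const. exact Hi. }
  split; [exact Hd|].
  assert (Hq := dw_const a b (fun x => h x - (h a + RInt e1 a x)) (fun x => h1 x - e1 x) Hab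
     (dw_minus _ _ _ _ _ Hh (glob_dw _ _ _ Hd))).
  intros x Hx. assert (E := Hq ltac:(intros y Hy; cbv beta; rewrite Heq by exact Hy; ring) x Hx).
  simpl in E. rewrite RInt_point in E. unfold zero in E; simpl in E. lra.
Qed.

Lemma C2_ext a b u : a < b ->
  (exists F : nat -> R -> R, F 0%nat = u /\ derive_within (closed_interval a b) (F 0%nat) (F 1%nat) /\
     derive_within (closed_interval a b) (F 1%nat) (F 2%nat) /\ continuous_within (closed_interval a b) (F 2%nat)) ->
  exists f f1 f2 : R -> R, (forall z, is_derive f z (f1 z)) /\ (forall z, is_derive f1 z (f2 z)) /\
    (forall z, continuity_pt f2 z) /\ (forall x, a <= x <= b -> f x = u x).
Proof.
  intros Hab [F [H0 [H1 [H2 H3]]]].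
  set (e2 := fun x => F 2%nat (clamp a b x)).
  assert (He2 : forall z, continuity_pt e2 z) by (apply cont_clamp; [lra| exact H3]).
  destruct (ext_step a b (F 1%nat) (F 2%nat) e2 Hab H2 He2) as [D1 E1].
  { intros x Hx. unfold e2. rewrite clamp_id; auto. }
  set (e1 := fun x => F 1%nat a + RInt e2 a x) in *.
  assert (He1 : forall z, continuity_pt e1 z).
  { intros z. eapply isd_cont. apply D1. }
  destruct (ext_step a b (F 0%nat) (F 1%nat) e1 Hab H1 He1) as [D0 E0].
  { intros x Hx. apply E1; exact Hx. }
  exists (fun x => F 0%nat a + RInt e1 a x), e1, e2.
  split; [exact D0|]. split; [exact D1|]. split; [exact He2|].
  intros x Hx. cbv beta. rewrite (E0 x Hx). rewrite H0; reflexivity.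
Qed.

Lemma Ck_to_C2 k a b u : (2 < k)%nat -> a < b -> Ck_on k (closed_interval a b) u ->
  exists f f1 f2 : R -> R, (forall z, is_derive f z (f1 z)) /\ (forall z, is_derive f1 z (f2 z)) /\
    (forall z, continuity_pt f2 z) /\ (forall x, a <= x <= b -> f x = u x).
Proof.
  intros Hk Hab [F [H0 [Hd Hc]]]. apply C2_ext; [exact Hab|].
  exists F. repeat split.
  - exact H0.
  - apply Hd; lia.
  - apply Hd; lia.
  - eapply dw_cont. apply Hd; lia.
Qed.
Definition vv (w : R) := 1 - w * w.
Definition PP (w : R) := 1 + vv w + vv w ^ 2 + vv w ^ 3 + vv w ^ 4 + vv w ^ 5.
Definition ss (w : R) := sqrt (PP w).
Definition phi (w : R) := w * ss w.
Definition m1 (w : R) := 6 / ss w.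
Definition m2 (w : R) := 6 * vv w ^ 4 / ss w.

Lemma vv_bnd w : -1 <= w <= 1 -> 0 <= vv w <= 1.
Proof. intros; unfold vv; nra. Qed.

Lemma PP_ge1 w : -1 <= w <= 1 -> 1 <= PP w.
Proof.
  intros Hw. destruct (vv_bnd w Hw). unfold PP.
  assert (0 <= vv w ^ 2) by (apply pow_le; lra).
  assert (0 <= vv w ^ 3) by (apply pow_le; lra).
  assert (0 <= vv w ^ 4) by (apply pow_le; lra).
  assert (0 <= vv w ^ 5) by (apply pow_le; lra).
  lra.
Qed.

Lemma ss_pos w : -1 <= w <= 1 -> 0 < ss w.
Proof. intros Hw. unfold ss. apply sqrt_lt_R0. pose proof (PP_ge1 w Hw); lra. Qed.

Lemma ss_sq w : -1 <= w <= 1 -> ss w * ss w = PP w.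
Proof. intros Hw. unfold ss. apply sqrt_sqrt. pose proof (PP_ge1 w Hw); lra. Qed.

Lemma phi_sq w : -1 <= w <= 1 -> phi w * phi w = 1 - vv w ^ 6.
Proof.
  intros Hw. unfold phi.
  replace (w * ss w * (w * ss w)) with (w * w * (ss w * ss w)) by ring.
  rewrite ss_sq by exact Hw. unfold PP, vv. ring.
Qed.

Lemma phi_bnd w : -1 <= w <= 1 -> Rabs (phi w) <= 1.
Proof.
  intros Hw. pose proof (phi_sq w Hw). destruct (vv_bnd w Hw).
  assert (0 <= vv w ^ 6) by (apply pow_le; lra).
  apply Rabs_le. nra.
Qed.

Definition kc (k : R -> R) := forall w, -1 <= w <= 1 -> continuity_pt k w.

Lemma kc_vv : kc vv.
Proof. intros w _. unfold vv. reg. Qed.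

Lemma kc_ss : kc ss.
Proof.
  intros w Hw. unfold ss.
  apply (continuity_pt_comp PP sqrt).
  - unfold PP, vv. reg.
  - apply continuity_pt_sqrt. pose proof (PP_ge1 w Hw); lra.
Qed.

Lemma kc_phi : kc phi.
Proof. intros w Hw. unfold phi. apply continuity_pt_mult. apply continuity_pt_id. apply kc_ss; auto. Qed.

Lemma kc_m1 : kc m1.
Proof.
  intros w Hw. unfold m1. apply continuity_pt_div. apply continuity_pt_const; intros ? ?; auto.
  apply kc_ss; auto. pose proof (ss_pos w Hw); lra.
Qed.

Lemma kc_m2 : kc m2.
Proof.
  intros w Hw. unfold m2. apply continuity_pt_div.
  - apply continuity_pt_mult. apply continuity_pt_const; intros ? ?; auto.
    apply (continuity_pt_comp vv (fun x => x ^ 4)). apply kc_vv; auto.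
    apply derivable_continuous_pt. apply derivable_pt_pow.
  - apply kc_ss; auto.
  - pose proof (ss_pos w Hw); lra.
Qed.

Lemma kc_mult k l : kc k -> kc l -> kc (fun w => k w * l w).
Proof. intros Hk Hl w Hw. apply continuity_pt_mult; auto. Qed.

Lemma kc_phik k : kc k -> kc (fun w => phi w * k w).
Proof. intros Hk. apply kc_mult; [apply kc_phi| exact Hk]. Qed.
Lemma phi_der w : -1 <= w <= 1 -> is_derive phi w (6 * vv w ^ 5 / ss w).
Proof.
  intros Hw. pose proof (PP_ge1 w Hw) as HP. pose proof (ss_pos w Hw) as Hs.
  pose proof (ss_sq w Hw) as Hss.
  assert (HdP : is_derive PP w (-2 * w * (1 + 2 * vv w + 3 * vv w ^ 2 + 4 * vv w ^ 3 + 5 * vv w ^ 4))).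
  { unfold PP, vv. auto_derive; [exact I| ring]. }
  assert (Hsq : is_derive sqrt (PP w) (/ (2 * ss w))).
  { rewrite is_derive_Reals. apply derivable_pt_lim_sqrt. lra. }
  unfold phi.
  eapply isd_eq. apply isd_mult. apply isd_id. unfold ss. apply (isd_comp sqrt PP). exact Hsq. exact HdP.
  fold (ss w).
  apply (Rmult_eq_reg_r (ss w)); [|lra].
  field_simplify; [|lra|lra].
  rewrite ?Rmult_assoc. 
  replace (ss w ^ 2) with (PP w) by (rewrite <- Hss; ring).
  unfold PP, vv. field.
Qed.
Definition J (G k : R -> R) (p q : R) := RInt (fun w => G (p + q * phi w) * k w) (-1) 1.

Definition gcont (G : R -> R) := forall z, continuity_pt G z.

Lemma integ_cont G k p q : gcont G -> kc k -> kc (fun w => G (p + q * phi w) * k w).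
Proof.
  intros HG Hk w Hw. apply continuity_pt_mult; [|apply Hk; auto].
  apply (continuity_pt_comp (fun w => p + q * phi w) G); [|apply HG].
  apply continuity_pt_plus. apply continuity_pt_const; intros ? ?; auto.
  apply continuity_pt_mult. apply continuity_pt_const; intros ? ?; auto. apply kc_phi; auto.
Qed.

Lemma exR (f : R -> R) : kc f -> ex_RInt f (-1) 1.
Proof.
  intros Hf. apply (@ex_RInt_continuous R_CompleteNormedModule).
  rewrite Rmin_left, Rmax_right by lra. intros z Hz.
  apply continuity_pt_filterlim. apply Hf; auto.
Qed.

Lemma RInt_minus_R (f g : R -> R) : ex_RInt f (-1) 1 -> ex_RInt g (-1) 1 ->
  RInt (fun x => f x - g x) (-1) 1 = RInt f (-1) 1 - RInt g (-1) 1.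
Proof. intros Hf Hg. apply (@RInt_minus R_CompleteNormedModule); auto. Qed.

Lemma J_cont G k : gcont G -> kc k -> forall p0 q0 eps, 0 < eps ->
  exists del, 0 < del /\ forall p q, Rabs (p - p0) < del -> Rabs (q - q0) < del ->
    Rabs (J G k p q - J G k p0 q0) < eps.
Proof.
  intros HG Hk p0 q0 eps Heps.
  destruct (continuity_ab_maj (fun w => Rabs (k w)) (-1) 1) as [Mx [HM _]]; [lra| |].
  { intros c Hc. apply (continuity_pt_comp k Rabs). apply Hk; auto. apply Rcontinuity_abs. }
  set (K := Rabs (k Mx)) in *.
  assert (HK : 0 <= K) by apply Rabs_pos.
  set (Rr := Rabs p0 + Rabs q0 + 2).
  assert (Hu := Heine G (fun c => -Rr <= c <= Rr) (compact_P3 (-Rr) Rr) (fun x _ => HG x)).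
  assert (He' : 0 < eps / (4 * (K + 1))) by (apply Rdiv_lt_0_compat; lra).
  destruct (Hu (mkposreal _ He')) as [d Hd]. simpl in Hd.
  pose proof (cond_pos d) as Hdp.
  exists (Rmin 1 (d / 2)). split; [apply Rmin_pos; lra|].
  intros p q Hp Hq.
  assert (Hp1 : Rabs (p - p0) < 1) by (eapply Rlt_le_trans; [exact Hp| apply Rmin_l]).
  assert (Hp2 : Rabs (p - p0) < d / 2) by (eapply Rlt_le_trans; [exact Hp| apply Rmin_r]).
  assert (Hq1 : Rabs (q - q0) < 1) by (eapply Rlt_le_trans; [exact Hq| apply Rmin_l]).
  assert (Hq2 : Rabs (q - q0) < d / 2) by (eapply Rlt_le_trans; [exact Hq| apply Rmin_r]).
  unfold J. rewrite <- RInt_minus_R by (apply exR, integ_cont; auto).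
  eapply Rle_lt_trans.
  apply abs_RInt_le_const with (M := eps / (4 * (K + 1)) * K); [lra| apply exR; intros w Hw; apply continuity_pt_minus; apply integ_cont; auto|].
  - intros w Hw. rewrite <- Rmult_minus_distr_r, Rabs_mult.
    apply Rmult_le_compat; [apply Rabs_pos| apply Rabs_pos| |apply HM; auto].
    apply Rlt_le. apply Hd.
    + pose proof (phi_bnd w Hw).
      assert (Rabs (p + q * phi w) <= Rabs p + Rabs q).
      { eapply Rle_trans; [apply Rabs_triang|]. rewrite Rabs_mult.
        pose proof (Rabs_pos q). nra. }
      assert (Rabs p <= Rabs p0 + 1).
      { replace p with ((p - p0) + p0) by ring. eapply Rle_trans; [apply Rabs_triang|]. lra. }
      assert (Rabs q <= Rabs q0 + 1).
      { replace q with ((q - q0) + q0) by ring. eapply Rle_trans; [apply Rabs_triang|]. lra. }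
      apply Rabs_le_inv. unfold Rr. lra.
    + pose proof (phi_bnd w Hw).
      assert (Rabs (p0 + q0 * phi w) <= Rabs p0 + Rabs q0).
      { eapply Rle_trans; [apply Rabs_triang|]. rewrite Rabs_mult.
        pose proof (Rabs_pos q0). nra. }
      apply Rabs_le_inv. unfold Rr. lra.
    + replace (p + q * phi w - (p0 + q0 * phi w)) with ((p - p0) + (q - q0) * phi w) by ring.
      eapply Rle_lt_trans; [apply Rabs_triang|]. rewrite Rabs_mult.
      pose proof (phi_bnd w Hw). pose proof (Rabs_pos (q - q0)). nra.
  - assert (E : (1 - -1) * (eps / (4 * (K + 1)) * K) = eps * (K / (2 * (K + 1)))) by (field; lra).
    rewrite E. assert (K / (2 * (K + 1)) < 1).
    { apply (Rmult_lt_reg_r (2 * (K + 1))); [lra|]. unfold Rdiv. rewrite Rmult_assoc, Rinv_l; lra. }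
    nra.
Qed.
Lemma c2d_v (k : R -> R) x t : continuity_pt k t -> continuity_2d_pt (fun u v => k v) x t.
Proof. intros H. apply (continuity_1d_2d_pt_comp k (fun u v => v)); [exact H| apply continuity_2d_pt_id2]. Qed.

Lemma c2d_const c x t : continuity_2d_pt (fun _ _ => c) x t.
Proof. apply continuity_2d_pt_const. Qed.

Lemma J_dp (G G1 k : R -> R) (p q : R) : (forall z, is_derive G z (G1 z)) -> gcont G1 -> kc k ->
  is_derive (fun p => J G k p q) p (J G1 k p q).
Proof.
  intros HG HG1 Hk. unfold J.
  assert (Hd : forall u t, is_derive (fun z => G (z + q * phi t) * k t) u (G1 (u + q * phi t) * k t)).
  { intros u t. apply isd_eq with (a := G1 (u + q * phi t) * (1 + 0) * k t + G (u + q * phi t) * 0); [|ring].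
    apply (isd_mult (fun z => G (z + q * phi t)) (fun _ => k t)); [|apply isd_const].
    apply (isd_comp G (fun z => z + q * phi t)). apply HG. apply isd_plus. apply isd_id. apply isd_const. }
  assert (E := is_derive_RInt_param (fun u t => G (u + q * phi t) * k t) (-1) 1 p).
  rewrite (RInt_ext (fun t => Derive (fun u => G (u + q * phi t) * k t) p) (fun t => G1 (p + q * phi t) * k t)) in E.
  2: { intros t _. apply is_derive_unique. apply Hd. }
  apply E.
  - apply filter_forall. intros x t _. eexists. apply Hd.
  - rewrite Rmin_left, Rmax_right by lra. intros t Ht.
    apply continuity_2d_pt_ext with (f := fun u v => G1 (u + q * phi v) * k v).
    { intros; symmetry; apply is_derive_unique; apply Hd. }
    apply continuity_2d_pt_mult; [|apply c2d_v; apply Hk; auto].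
    apply (continuity_1d_2d_pt_comp G1 (fun u v => u + q * phi v)); [apply HG1|].
    apply continuity_2d_pt_plus; [apply continuity_2d_pt_id1|].
    apply continuity_2d_pt_mult; [apply c2d_const| apply c2d_v; apply kc_phi; auto].
  - apply filter_forall. intros y. apply exR. apply integ_cont; auto. intros z; eapply isd_cont; apply HG.
Qed.

Lemma J_dq (G G1 k : R -> R) (p q : R) : (forall z, is_derive G z (G1 z)) -> gcont G1 -> kc k ->
  is_derive (fun q => J G k p q) q (J G1 (fun w => phi w * k w) p q).
Proof.
  intros HG HG1 Hk. unfold J.
  assert (Hd : forall u t, is_derive (fun z => G (p + z * phi t) * k t) u (G1 (p + u * phi t) * (phi t * k t))).
  { intros u t. apply isd_eq with (a := G1 (p + u * phi t) * (0 + 1 * phi t) * k t + G (p + u * phi t) * 0); [|ring].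
    apply (isd_mult (fun z => G (p + z * phi t)) (fun _ => k t)); [|apply isd_const].
    apply (isd_comp G (fun z => p + z * phi t)). apply HG. apply isd_plus. apply isd_const.
    apply isd_eq with (a := 1 * phi t + u * 0); [|ring]. apply (isd_mult (fun z => z) (fun _ => phi t)). apply isd_id. apply isd_const. }
  assert (E := is_derive_RInt_param (fun u t => G (p + u * phi t) * k t) (-1) 1 q).
  rewrite (RInt_ext (fun t => Derive (fun u => G (p + u * phi t) * k t) q) (fun t => G1 (p + q * phi t) * (phi t * k t))) in E.
  2: { intros t _. apply is_derive_unique. apply Hd. }
  apply E.
  - apply filter_forall. intros x t _. eexists. apply Hd.
  - rewrite Rmin_left, Rmax_right by lra. intros t Ht.
    apply continuity_2d_pt_ext with (f := fun u v => G1 (p + u * phi v) * (phi v * k v)).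
    { intros; symmetry; apply is_derive_unique; apply Hd. }
    apply continuity_2d_pt_mult; [|apply c2d_v; apply kc_phik; auto].
    apply (continuity_1d_2d_pt_comp G1 (fun u v => p + u * phi v)); [apply HG1|].
    apply continuity_2d_pt_plus; [apply c2d_const|].
    apply continuity_2d_pt_mult; [apply continuity_2d_pt_id1| apply c2d_v; apply kc_phi; auto].
  - apply filter_forall. intros y. apply exR. apply integ_cont; auto. intros z; eapply isd_cont; apply HG.
Qed.
Lemma RInt_plus_R (f g : R -> R) : ex_RInt f (-1) 1 -> ex_RInt g (-1) 1 ->
  RInt (fun x => f x + g x) (-1) 1 = RInt f (-1) 1 + RInt g (-1) 1.
Proof. intros Hf Hg. apply (@RInt_plus R_CompleteNormedModule); auto. Qed.

Lemma RInt_scal_R (f : R -> R) c : ex_RInt f (-1) 1 ->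
  RInt (fun x => c * f x) (-1) 1 = c * RInt f (-1) 1.
Proof. intros Hf. apply (@RInt_scal R_CompleteNormedModule); auto. Qed.

Lemma key (G1 G2 m H H' : R -> R) (beta p q : R) :
  (forall z, is_derive G1 z (G2 z)) -> gcont G2 -> kc m ->
  (forall w, -1 <= w <= 1 -> is_derive H w (H' w)) ->
  (forall w, -1 <= w <= 1 -> H w * (6 * vv w ^ 5 / ss w) = 3/2 * (phi w * phi w - 1) * m w) ->
  (forall w, -1 <= w <= 1 -> H' w = beta * (phi w * m w)) ->
  H 1 = 0 -> H (-1) = 0 ->
  q * (3/2) * (J G2 (fun w => phi w * (phi w * m w)) p q - J G2 m p q)
    + beta * J G1 (fun w => phi w * m w) p q = 0.
Proof.
  intros HG1 HG2 Hm HH Hr1 Hr2 Ha Hb.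
  assert (HG1c : gcont G1) by (intros z; eapply isd_cont; apply HG1).
  set (A := fun w => G2 (p + q * phi w) * (phi w * (phi w * m w))).
  set (B := fun w => G2 (p + q * phi w) * m w).
  set (C := fun w => G1 (p + q * phi w) * (phi w * m w)).
  assert (kA : kc A) by (apply integ_cont; auto; apply kc_phik, kc_phik; auto).
  assert (kB : kc B) by (apply integ_cont; auto).
  assert (kC : kc C) by (apply integ_cont; auto; apply kc_phik; auto).
  set (nice := fun w => q * (3/2) * (A w - B w) + beta * C w).
  assert (Hn : is_RInt nice (-1) 1 (minus (G1 (p + q * phi 1) * H 1) (G1 (p + q * phi (-1)) * H (-1)))).
  { apply (is_RInt_derive (fun w => G1 (p + q * phi w) * H w) nice).
    - rewrite Rmin_left, Rmax_right by lra. intros x Hx.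
      apply isd_eq with (a := G2 (p + q * phi x) * (0 + (0 * phi x + q * (6 * vv x ^ 5 / ss x))) * H x
                              + G1 (p + q * phi x) * H' x).
      + apply (isd_mult (fun w => G1 (p + q * phi w)) H); [|apply HH; auto].
        apply (isd_comp G1 (fun w => p + q * phi w)); [apply HG1|].
        apply isd_plus; [apply isd_const|].
        apply (isd_mult (fun _ => q) phi); [apply isd_const| apply phi_der; auto].
      + replace (G2 (p + q * phi x) * (0 + (0 * phi x + q * (6 * vv x ^ 5 / ss x))) * H x)
          with (G2 (p + q * phi x) * q * (H x * (6 * vv x ^ 5 / ss x))) by ring.
        rewrite Hr1, Hr2 by auto. unfold nice, A, B, C. ring.
    - rewrite Rmin_left, Rmax_right by lra. intros x Hx.
      apply continuity_pt_filterlim. unfold nice.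
      apply (cpt_plus (fun w => q * (3/2) * (A w - B w)) (fun w => beta * C w)).
      + apply (cpt_scal (fun w => A w - B w)). apply (cpt_minus A B); auto.
      + apply (cpt_scal C). auto. }
  rewrite Ha, Hb in Hn. apply (@is_RInt_unique R_CompleteNormedModule) in Hn.
  assert (E : minus (G1 (p + q * phi 1) * 0) (G1 (p + q * phi (-1)) * 0) = 0).
  { unfold minus, plus, opp; simpl. ring. }
  rewrite E in Hn. rewrite <- Hn. unfold nice, J.
  rewrite (RInt_plus_R (fun w => q * (3/2) * (A w - B w)) (fun w => beta * C w)).
  rewrite (RInt_scal_R (fun w => A w - B w)), (RInt_scal_R C), (RInt_minus_R A B).
  reflexivity.
  all: try (apply exR; auto).
  - intros w Hw. apply (cpt_minus A B); auto.
  - intros w Hw. apply (cpt_scal (fun w => A w - B w)). apply (cpt_minus A B); auto.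
  - intros w Hw. apply (cpt_scal C). auto.
Qed.
Lemma isd_scal (f : R -> R) (c x a : R) : is_derive f x a -> is_derive (fun y => c * f y) x (c * a).
Proof. intros H. apply isd_eq with (a := 0 * f x + c * a); [|ring]. apply (isd_mult (fun _ => c) f). apply isd_const. exact H. Qed.

Definition rr (y : R) := sqrt (- y).
Definition tau (y : R) := 2/3 * (- y) * rr y.

Lemma rr_pos y : y < 0 -> 0 < rr y.
Proof. intros; unfold rr; apply sqrt_lt_R0; lra. Qed.
Lemma rr_sq y : y < 0 -> rr y * rr y = - y.
Proof. intros; unfold rr; apply sqrt_sqrt; lra. Qed.

Lemma rr_der y : y < 0 -> is_derive rr y (- / (2 * rr y)).
Proof.
  intros Hy. unfold rr.
  apply isd_eq with (a := / (2 * sqrt (- y)) * (- 1)); [|ring].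
  apply (isd_comp sqrt (fun t => - t)).
  - rewrite is_derive_Reals. apply derivable_pt_lim_sqrt. lra.
  - apply isd_eq with (a := - 1 * 1); [|ring].
    apply isd_ext with (f := fun t => -1 * t); [intros; ring|]. apply (isd_scal (fun t => t)). apply isd_id.
Qed.
Lemma tau_der y : y < 0 -> is_derive tau y (- rr y).
Proof.
  intros Hy. pose proof (rr_pos y Hy). pose proof (rr_sq y Hy).
  unfold tau.
  apply isd_eq with (a := (2/3 * (-1)) * rr y + 2/3 * (- y) * (- / (2 * rr y))).
  - apply (isd_mult (fun t => 2/3 * (- t)) rr); [|apply rr_der; auto].
    apply isd_eq with (a := (2/3 * -1) * 1); [|ring].
    apply isd_ext with (f := fun t => (2/3 * -1) * t); [intros; ring|]. apply (isd_scal (fun t => t)). apply isd_id.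
  - replace (- y) with (rr y * rr y) by lra. field. lra.
Qed.

Lemma rr_cont y : continuity_pt rr y.
Proof.
  unfold rr. apply (continuity_pt_comp (fun t => - t) sqrt).
  - apply continuity_pt_opp. apply continuity_pt_id.
  - apply continuity_pt_filterlim. apply continuous_sqrt.
Qed.

Lemma tau_cont y : continuity_pt tau y.
Proof.
  unfold tau. apply (cpt_mult (fun t => 2/3 * - t) rr); [|apply rr_cont].
  apply (cpt_scal (fun t => - t)). apply continuity_pt_opp. apply continuity_pt_id.
Qed.

Lemma Jt_der (G G1 k : R -> R) x y : (forall z, is_derive G z (G1 z)) -> gcont G1 -> kc k -> y < 0 ->
  is_derive (fun t => J G k x (tau t)) y (J G1 (fun w => phi w * k w) x (tau y) * (- rr y)).
Proof.
  intros HG HG1 Hk Hy. apply (isd_comp (fun q => J G k x q) tau).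
  - apply J_dq; auto.
  - apply tau_der; auto.
Qed.

Lemma Jx_der (G G1 k : R -> R) x y : (forall z, is_derive G z (G1 z)) -> gcont G1 -> kc k ->
  is_derive (fun t => J G k t (tau y)) x (J G1 k x (tau y)).
Proof. intros; apply J_dp; auto. Qed.

Lemma Jc2 (G k : R -> R) x y : gcont G -> kc k -> continuity_2d_pt (fun x y => J G k x (tau y)) x y.
Proof.
  intros HG Hk eps.
  destruct (J_cont G k HG Hk x (tau y) eps (cond_pos eps)) as [d [Hd Hj]].
  pose proof (tau_cont y) as Ht.
  destruct (Ht d Hd) as [d2 [Hd2 Ht2]].
  assert (Hp : 0 < Rmin d d2) by (apply Rmin_pos; lra).
  exists (mkposreal _ Hp). simpl. intros u v Hu Hv.
  apply Hj.
  - eapply Rlt_le_trans; [exact Hu| apply Rmin_l].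
  - destruct (Req_dec v y) as [->|Hne].
    + rewrite Rminus_diag, Rabs_R0; lra.
    + apply (Ht2 v). split; [split; [exact I| auto]|].
      simpl. unfold R_dist. eapply Rlt_le_trans; [exact Hv| apply Rmin_r].
Qed.

Lemma c2d_within D (F : R -> R -> R) : (forall x y, continuity_2d_pt F x y) -> continuous2_within D F.
Proof.
  intros H x y _ eps Heps. destruct (H x y (mkposreal _ Heps)) as [d Hd].
  exists d. split; [apply cond_pos|]. intros x' y' _ Hx Hy. apply Hd; auto.
Qed.

Lemma vv_pm1 : vv 1 = 0 /\ vv (-1) = 0.
Proof. unfold vv; split; ring. Qed.

Lemma K1 (G1 G2 : R -> R) p q : (forall z, is_derive G1 z (G2 z)) -> gcont G2 ->
  q * (3/2) * (J G2 (fun w => phi w * (phi w * m1 w)) p q - J G2 m1 p q)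
    + 1/2 * J G1 (fun w => phi w * m1 w) p q = 0.
Proof.
  intros HG HG2.
  apply (key G1 G2 m1 (fun w => -(3/2) * vv w) (fun w => 3 * w)); auto.
  - apply kc_m1.
  - intros w Hw. unfold vv. auto_derive; [exact I| match goal with |- ?a = ?b => change (@eq R a b); field end].
  - intros w Hw. rewrite phi_sq by auto. pose proof (ss_pos w Hw). unfold m1. field. lra.
  - intros w Hw. pose proof (ss_pos w Hw). unfold m1, phi. field. lra.
  - rewrite (proj1 vv_pm1); ring.
  - rewrite (proj2 vv_pm1); ring.
Qed.

Lemma K2 (G1 G2 : R -> R) p q : (forall z, is_derive G1 z (G2 z)) -> gcont G2 ->
  q * (3/2) * (J G2 (fun w => phi w * (phi w * m2 w)) p q - J G2 m2 p q)
    + 5/2 * J G1 (fun w => phi w * m2 w) p q = 0.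
Proof.
  intros HG HG2.
  apply (key G1 G2 m2 (fun w => -(3/2) * vv w ^ 5) (fun w => 15 * w * vv w ^ 4)); auto.
  - apply kc_m2.
  - intros w Hw. unfold vv. auto_derive; [exact I| match goal with |- ?a = ?b => change (@eq R a b); field end].
  - intros w Hw. rewrite phi_sq by auto. pose proof (ss_pos w Hw). unfold m2. field. lra.
  - intros w Hw. pose proof (ss_pos w Hw). unfold m2, phi. field. lra.
  - rewrite (proj1 vv_pm1); ring.
  - rewrite (proj2 vv_pm1); ring.
Qed.

Lemma J_at0 (G k : R -> R) x : kc k -> J G k x 0 = G x * RInt k (-1) 1.
Proof.
  intros Hk. unfold J. rewrite <- RInt_scal_R.
  - apply RInt_ext. intros w _. replace (x + 0 * phi w) with x by ring. reflexivity.
  - apply exR; auto.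
Qed.

Lemma I1_pos : 0 < RInt m1 (-1) 1.
Proof.
  apply RInt_gt_0; [lra| |].
  - intros x Hx. pose proof (ss_pos x ltac:(lra)). unfold m1. apply Rdiv_lt_0_compat; lra.
  - intros x Hx. apply continuity_pt_filterlim. apply kc_m1; auto.
Qed.

Lemma I2_pos : 0 < RInt m2 (-1) 1.
Proof.
  apply RInt_gt_0; [lra| |].
  - intros x Hx. pose proof (ss_pos x ltac:(lra)). unfold m2. apply Rdiv_lt_0_compat; [|lra].
    assert (0 < vv x) by (unfold vv; nra). assert (0 < vv x ^ 4) by (apply pow_lt; lra). lra.
  - intros x Hx. apply continuity_pt_filterlim. apply kc_m2; auto.
Qed.

Lemma tau0 : tau 0 = 0.
Proof. unfold tau, rr. rewrite Ropp_0, sqrt_0. ring. Qed.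
Lemma rr0 : rr 0 = 0.
Proof. unfold rr. rewrite Ropp_0, sqrt_0. reflexivity. Qed.

Lemma isd_opp (f : R -> R) (x a : R) : is_derive f x a -> is_derive (fun y => - f y) x (- a).
Proof. rewrite !is_derive_Reals. intros; apply derivable_pt_lim_opp; auto. Qed.
Theorem theoremA1 (x1 x2 : R) (u0 u1 : R -> R)
  (hx : x1 < x2)
  (h0 : Ck_on 4 (closed_interval x1 x2) u0)
  (h1 : Ck_on 3 (closed_interval x1 x2) u1) :
  exists delta : R,
    0 < delta /\
    delta <= Rpower (9 * (x2 - x1) ^ 2 / 16) (1 / 3) /\
    exists u : R -> R -> R, classical_solution x1 x2 delta u0 u1 u.
Proof.
  destruct (Ck_to_C2 4 x1 x2 u0 ltac:(lia) hx h0) as [f [f1 [f2 [Hf [Hf1 [Hf2 Ef]]]]]].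
  destruct (Ck_to_C2 3 x1 x2 u1 ltac:(lia) hx h1) as [g [g1 [g2 [Hg [Hg1 [Hg2 Eg]]]]]].
  assert (Cf : gcont f) by (intros z; eapply isd_cont; apply Hf).
  assert (Cf1 : gcont f1) by (intros z; eapply isd_cont; apply Hf1).
  assert (Cg : gcont g) by (intros z; eapply isd_cont; apply Hg).
  assert (Cg1 : gcont g1) by (intros z; eapply isd_cont; apply Hg1).
  pose proof I1_pos as HI1. pose proof I2_pos as HI2.
  set (c1 := / RInt m1 (-1) 1). set (c2 := / RInt m2 (-1) 1).
  pose proof kc_m1 as k1. pose proof kc_m2 as k2.
  pose proof (kc_phik m1 k1) as k1p. pose proof (kc_phik m2 k2) as k2p.
  exists (Rpower (9 * (x2 - x1) ^ 2 / 16) (1 / 3)).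
  split; [unfold Rpower; apply exp_pos|]. split; [lra|].
  exists (fun x y => c1 * J f m1 x (tau y) + c2 * y * J g m2 x (tau y)).
  exists (fun x y => c1 * J f1 m1 x (tau y) + c2 * y * J g1 m2 x (tau y)).
  exists (fun x y => - (c1 * rr y * J f1 (fun w => phi w * m1 w) x (tau y)) + c2 * J g m2 x (tau y)
                     - c2 * y * rr y * J g1 (fun w => phi w * m2 w) x (tau y)).
  exists (fun x y => c1 * J f2 m1 x (tau y) + c2 * y * J g2 m2 x (tau y)).
  exists (fun x y => - (c1 * rr y * J f2 (fun w => phi w * m1 w) x (tau y)) + c2 * J g1 m2 x (tau y)
                     - c2 * y * rr y * J g2 (fun w => phi w * m2 w) x (tau y)).
  exists (fun x y => - y * (c1 * J f2 m1 x (tau y) + c2 * y * J g2 m2 x (tau y))).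
  split.
  { intros x y [[_ Hy] _].
    pose proof (rr_pos y Hy) as Hr. pose proof (rr_sq y Hy) as Hr2.
    split; [|split; [|split; [|split; [|split]]]]; apply is_derive_Reals.
    - apply (isd_plus (fun t => c1 * J f m1 t (tau y)) (fun t => c2 * y * J g m2 t (tau y)));
        apply (isd_scal (fun t => J _ _ t (tau y))); apply Jx_der; auto.
    - eapply isd_eq.
      + apply (isd_plus (fun t => c1 * J f m1 x (tau t)) (fun t => c2 * t * J g m2 x (tau t))).
        * apply (isd_scal (fun t => J f m1 x (tau t))). apply Jt_der; auto.
        * apply (isd_mult (fun t => c2 * t) (fun t => J g m2 x (tau t))).
          -- apply (isd_scal (fun t => t)). apply isd_id.
          -- apply Jt_der; auto.
      + ring.
    - apply (isd_plus (fun t => c1 * J f1 m1 t (tau y)) (fun t => c2 * y * J g1 m2 t (tau y)));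
        apply (isd_scal (fun t => J _ _ t (tau y))); apply Jx_der; auto.
    - eapply isd_eq.
      + apply (isd_plus (fun t => c1 * J f1 m1 x (tau t)) (fun t => c2 * t * J g1 m2 x (tau t))).
        * apply (isd_scal (fun t => J f1 m1 x (tau t))). apply Jt_der; auto.
        * apply (isd_mult (fun t => c2 * t) (fun t => J g1 m2 x (tau t))).
          -- apply (isd_scal (fun t => t)). apply isd_id.
          -- apply Jt_der; auto.
      + ring.
    - eapply isd_eq.
      + apply (isd_minus (fun t => - (c1 * rr y * J f1 (fun w => phi w * m1 w) t (tau y)) + c2 * J g m2 t (tau y))
                         (fun t => c2 * y * rr y * J g1 (fun w => phi w * m2 w) t (tau y))).
        * apply (isd_plus (fun t => - (c1 * rr y * J f1 (fun w => phi w * m1 w) t (tau y))) (fun t => c2 * J g m2 t (tau y))).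
          -- apply (isd_opp (fun t => c1 * rr y * J f1 (fun w => phi w * m1 w) t (tau y))).
             apply (isd_scal (fun t => J _ _ t (tau y))); apply Jx_der; auto.
          -- apply (isd_scal (fun t => J _ _ t (tau y))); apply Jx_der; auto.
        * apply (isd_scal (fun t => J _ _ t (tau y))); apply Jx_der; auto.
      + ring.
    - eapply isd_eq.
      + apply (isd_minus (fun t => - (c1 * rr t * J f1 (fun w => phi w * m1 w) x (tau t)) + c2 * J g m2 x (tau t))
                         (fun t => c2 * t * rr t * J g1 (fun w => phi w * m2 w) x (tau t))).
        * apply (isd_plus (fun t => - (c1 * rr t * J f1 (fun w => phi w * m1 w) x (tau t))) (fun t => c2 * J g m2 x (tau t))).
          -- apply (isd_opp (fun t => c1 * rr t * J f1 (fun w => phi w * m1 w) x (tau t))).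
             apply (isd_mult (fun t => c1 * rr t) (fun t => J f1 (fun w => phi w * m1 w) x (tau t))).
             ++ apply (isd_scal rr). apply rr_der; auto.
             ++ apply Jt_der; auto.
          -- apply (isd_scal (fun t => J g m2 x (tau t))). apply Jt_der; auto.
        * apply (isd_mult (fun t => c2 * t * rr t) (fun t => J g1 (fun w => phi w * m2 w) x (tau t))).
          -- apply (isd_mult (fun t => c2 * t) rr).
             ++ apply (isd_scal (fun t => t)). apply isd_id.
             ++ apply rr_der; auto.
          -- apply Jt_der; auto.
      + cbv beta.
        pose proof (K1 f1 f2 x (tau y) Hf1 Hf2) as E1.
        pose proof (K2 g1 g2 x (tau y) Hg1 Hg2) as E2.
        set (A1 := J f2 (fun w => phi w * (phi w * m1 w)) x (tau y)) in *.
        set (B1 := J f2 m1 x (tau y)) in *.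
        set (C1 := J f1 (fun w => phi w * m1 w) x (tau y)) in *.
        set (A2 := J g2 (fun w => phi w * (phi w * m2 w)) x (tau y)) in *.
        set (B2 := J g2 m2 x (tau y)) in *.
        set (C2 := J g1 (fun w => phi w * m2 w) x (tau y)) in *.
        set (D := J g m2 x (tau y)) in *.
        unfold tau in E1, E2. set (r := rr y) in *.
        clearbody A1 B1 C1 A2 B2 C2 D r.
        assert (EC1 : C1 = - 2 * (r * r * r) * (A1 - B1)).
        { replace (- y) with (r * r) in E1 by lra. lra. }
        assert (EC2 : C2 = - 2/5 * (r * r * r) * (A2 - B2)).
        { replace (- y) with (r * r) in E2 by lra. lra. }
        rewrite EC1, EC2. replace y with (- (r * r)) by lra. field. lra. }
  split.
  { apply c2d_within. intros x y.
    apply continuity_2d_pt_plus; apply continuity_2d_pt_mult;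
      try apply continuity_2d_pt_mult; try apply c2d_const; try apply continuity_2d_pt_id2;
      apply Jc2; auto. }
  split.
  { apply c2d_within. intros x y.
    apply continuity_2d_pt_plus; apply continuity_2d_pt_mult;
      try apply continuity_2d_pt_mult; try apply c2d_const; try apply continuity_2d_pt_id2;
      apply Jc2; auto. }
  split.
  { apply c2d_within. intros x y.
    apply continuity_2d_pt_minus; [apply continuity_2d_pt_plus; [apply continuity_2d_pt_opp|]|];
      repeat apply continuity_2d_pt_mult; try apply c2d_const; try apply continuity_2d_pt_id2;
      try (apply c2d_v; apply rr_cont); apply Jc2; auto. }
  split.
  { apply c2d_within. intros x y.
    apply continuity_2d_pt_plus; apply continuity_2d_pt_mult;
      try apply continuity_2d_pt_mult; try apply c2d_const; try apply continuity_2d_pt_id2;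
      apply Jc2; auto. }
  split.
  { apply c2d_within. intros x y.
    apply continuity_2d_pt_minus; [apply continuity_2d_pt_plus; [apply continuity_2d_pt_opp|]|];
      repeat apply continuity_2d_pt_mult; try apply c2d_const; try apply continuity_2d_pt_id2;
      try (apply c2d_v; apply rr_cont); apply Jc2; auto. }
  split.
  { apply c2d_within. intros x y.
    apply continuity_2d_pt_mult; [apply continuity_2d_pt_opp; apply continuity_2d_pt_id2|].
    apply continuity_2d_pt_plus; apply continuity_2d_pt_mult;
      try apply continuity_2d_pt_mult; try apply c2d_const; try apply continuity_2d_pt_id2;
      apply Jc2; auto. }
  split.
  { intros x y _. ring. }
  intros x Hx. rewrite tau0, rr0, !J_at0 by auto.
  split.
  - rewrite <- Ef by exact Hx. unfold c1. field. lra.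
  - rewrite <- Eg by exact Hx. unfold c2. field. lra.
Qed.
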